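(* Let $X\in\mathbb{R}^{d\times d}$ be positive definite with eigenvalues $\gamma_1\geqslant\dots\geqslant\gamma_d$ satisfying $\lambda\leqslant\gamma_i\leqslant\Lambda$, where $0<\lambda\leqslant\Lambda$. Set $\mu=\frac{4}{(\sqrt\lambda+\sqrt\Lambda)^2}$, $\beta=\big(\frac{\sqrt\Lambda-\sqrt\lambda}{\sqrt\Lambda+\sqrt\lambda}\big)^2$, and for $i\in\{1,\dots,d\}$ let $X^{(i)}_{\mu,\beta}=\begin{bmatrix}1+\beta-\mu\gamma_i & -\beta\\ 1 & 0\end{bmatrix}$. Then $$\max_{i\in\{1,\dots,d\}}\frac{\|X^{(i)}_{\mu,\beta}\|_2^2}{\|(X^{(i)}_{\mu,\beta})^2\|_2}\leqslant\frac1\beta\,(1+4\beta+\beta^2).$$ *)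

(* Defs.v *)
From HB Require Import structures.
From mathcomp Require Import all_boot all_order all_algebra.
From mathcomp Require Import boolp classical_sets reals.
Set Implicit Arguments. Unset Strict Implicit. Unset Printing Implicit Defensive.
Import Order.TTheory GRing.Theory Num.Theory.
Local Open Scope ring_scope.
Local Open Scope classical_set_scope.

Definition vnorm2 {R : realType} {n : nat} (v : 'cV[R]_n) : R :=
  Num.sqrt (\sum_(i < n) (v i 0) ^+ 2).

Definition spec_norm {R : realType} {m n : nat} (A : 'M[R]_(m, n)) : R :=
  sup [set vnorm2 (A *m v) | v in [set v : 'cV[R]_n | vnorm2 v <= 1]].

Definition posdef {R : realType} {d : nat} (X : 'M[R]_d) : Prop :=
  X^T = X /\ forall v : 'cV[R]_d, v != 0 -> 0 < (v^T *m X *m v) 0 0.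

Definition hb_mat {R : realType} (mu beta g : R) : 'M[R]_2 :=
  \matrix_(i < 2, j < 2)
    if (i : nat) == 0%N then (if (j : nat) == 0%N then 1 + beta - mu * g else - beta)
    else (if (j : nat) == 0%N then 1 else 0).

(* Main.v *)
Require Import Defs.
From HB Require Import structures.
From mathcomp Require Import all_boot all_order all_algebra.
From mathcomp Require Import boolp classical_sets reals.
From mathcomp Require Import ring lra.
Import Order.TTheory GRing.Theory Num.Theory.
Local Open Scope ring_scope.

Set Implicit Arguments. Unset Strict Implicit.

Section S.
Variable R : realType.

Definition frob (M : 'M[R]_2) := M 0 0 ^+ 2 + M 0 1 ^+ 2 + M 1 0 ^+ 2 + M 1 1 ^+ 2.

Lemma sum2 (F : 'I_2 -> R) : \sum_(i < 2) F i = F 0 + F 1.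
Proof. by rewrite big_ord_recr /= big_ord1; congr (F _ + F _); apply/val_inj. Qed.

Lemma vn2 (v : 'cV[R]_2) : vnorm2 v = Num.sqrt (v 0 0 ^+ 2 + v 1 0 ^+ 2).
Proof. by rewrite /vnorm2 sum2. Qed.

Lemma mulv2 (M : 'M[R]_2) (v : 'cV[R]_2) i :
  (M *m v) i 0 = M i 0 * v 0 0 + M i 1 * v 1 0.
Proof. by rewrite mxE sum2. Qed.

Lemma alg1 (a b c e x y : R) : x^+2 + y^+2 <= 1 ->
  (a * x + b * y) ^+ 2 + (c * x + e * y) ^+ 2 <= a^+2 + b^+2 + c^+2 + e^+2.
Proof.
move=> h1.
have e1 : (a * x + b * y) ^+ 2 <= (a^+2 + b^+2) * (x^+2+y^+2).
  have : 0 <= (a * y - b * x) ^+ 2 by apply: sqr_ge0.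
  lra.
have e2 : (c * x + e * y) ^+ 2 <= (c^+2 + e^+2) * (x^+2+y^+2).
  have : 0 <= (c * y - e * x) ^+ 2 by apply: sqr_ge0.
  lra.
have : 0 <= (a^+2 + b^+2 + c^+2 + e^+2) * (1 - (x^+2+y^+2)).
  by apply: mulr_ge0; [by rewrite !addr_ge0 ?sqr_ge0 | lra].
lra.
Qed.

Lemma vnMv (M : 'M[R]_2) (v : 'cV[R]_2) : vnorm2 v <= 1 ->
  vnorm2 (M *m v) <= Num.sqrt (frob M).
Proof.
rewrite !vn2 !mulv2 /frob => h.
have h1 : v 0 0 ^+ 2 + v 1 0 ^+ 2 <= 1.
  by rewrite -sqrtr1 ler_sqrt // in h.
rewrite ler_sqrt; last by rewrite /frob !addr_ge0 ?sqr_ge0.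
exact: alg1.
Qed.

Lemma spec_le (M : 'M[R]_2) : spec_norm M <= Num.sqrt (frob M).
Proof.
apply: ge_sup.
  exists (vnorm2 (M *m 0)); exists 0 => //.
  by rewrite /= /vnorm2 big1 ?sqrtr0 // => i _; rewrite mxE expr0n.
by move=> _ [v hv <-]; apply: vnMv.
Qed.

Lemma spec_ge (M : 'M[R]_2) (v : 'cV[R]_2) : vnorm2 v <= 1 ->
  vnorm2 (M *m v) <= spec_norm M.
Proof.
move=> hv; apply: sup_upper_bound; last by exists v.
split; first by exists (vnorm2 (M *m v)), v.
by exists (Num.sqrt (frob M)) => _ [w hw <-]; apply: vnMv.
Qed.
End S.

Section S2.
Variable R : realType.

Lemma spec_ge0 (M : 'M[R]_2) : 0 <= spec_norm M.
Proof.
apply: le_trans (@spec_ge R M 0 _); first exact: sqrtr_ge0.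
by rewrite /vnorm2 big1 ?sqrtr0 // => i _; rewrite mxE expr0n.
Qed.

Lemma alg2 (s t g : R) : 0 < s -> s <= t -> s^+2 <= g <= t^+2 ->
  (1 + ((t - s) / (t + s)) ^+ 2 - 4 / (s + t) ^+ 2 * g) ^+ 2
   <= 4 * ((t - s) / (t + s)) ^+ 2.
Proof.
move=> s0 st /andP[g1 g2].
rewrite (addrC s t).
have p0 : 0 < t + s by lra.
set p := t + s.
set u := p^-1.
have pu : p * u = 1 by rewrite /u divff // gt_eqF.
have -> : 1 + ((t - s) / p) ^+ 2 - 4 / p ^+ 2 * g
   = (2 * t^+2 + 2 * s^+2 - 4 * g) * u ^+ 2.
  rewrite /u /p; field; lra.
set k := 2 * t^+2 + 2 * s^+2 - 4 * g.
have hk : k ^+ 2 <= (2 * (t - s) * p) ^+ 2.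
  have : 0 <= (2 * (t - s) * p - k) * (2 * (t - s) * p + k).
    have -> : 2 * (t - s) * p - k = 4 * (g - s^+2) by rewrite /k /p; ring.
    have -> : 2 * (t - s) * p + k = 4 * (t^+2 - g) by rewrite /k /p; ring.
    apply: mulr_ge0; clear -g1 g2; lra.
  nra.
rewrite exprMn -exprM.
have -> : 4 * ((t - s) / p) ^+ 2 = (2 * (t - s) * p) ^+ 2 * u ^+ (2 * 2).
  rewrite /u /p; field; clear -p0; lra.
apply: ler_wpM2r hk; rewrite exprn_ge0 // /u invr_ge0 ltW //.
Qed.
End S2.

Section S3.
Variable R : realType.

Lemma ratio_le (mu beta g : R) : 0 <= beta ->
  (1 + beta - mu * g) ^+ 2 <= 4 * beta ->
  spec_norm (hb_mat mu beta g) ^+ 2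
    / spec_norm (hb_mat mu beta g *m hb_mat mu beta g)
  <= beta^-1 * (1 + 4 * beta + beta ^+ 2).
Proof.
move=> b0 ha.
set A := hb_mat mu beta g.
set a := 1 + beta - mu * g.
have A00 : A 0 0 = a by rewrite mxE.
have A01 : A 0 1 = - beta by rewrite mxE.
have A10 : A 1 0 = 1 by rewrite mxE.
have A11 : A 1 1 = 0 by rewrite mxE.
have AA i j : (A *m A) i j = A i 0 * A 0 j + A i 1 * A 1 j by rewrite mxE sum2.
have hx : spec_norm A ^+ 2 <= 1 + 4 * beta + beta ^+ 2.
  have h1 := spec_le A; have h0 := spec_ge0 A.
  have : spec_norm A ^+ 2 <= frob A.
    rewrite -(@sqr_sqrtr _ (frob A)); last by rewrite /frob !addr_ge0 ?sqr_ge0.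
    by rewrite ler_sqr // nnegrE sqrtr_ge0.
  rewrite /frob A00 A01 A10 A11 sqrrN expr1n expr0n /= addr0; move: ha; rewrite -/a; lra.
have y0 := spec_ge0 (A *m A).
have [b_eq|bpos] := eqVneq beta 0.
  have a0 : a = 0.
    apply/eqP; rewrite -sqrf_eq0 eq_le sqr_ge0 andbT.
    have : a ^+ 2 <= 4 * beta := ha.
    by rewrite b_eq mulr0.
  have : spec_norm (A *m A) <= 0.
    apply: le_trans (spec_le _) _.
    rewrite /frob !AA A00 A01 A10 A11 a0 b_eq oppr0.
    by rewrite !(mul0r, mulr0, addr0, expr0n) /= sqrtr0.
  move=> y1; have -> : spec_norm (A *m A) = 0 by apply/eqP; rewrite eq_le y1 y0.
  by rewrite b_eq invr0 !mulr0 mul0r.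
have bp : 0 < beta by rewrite lt_def bpos b0.
have hy : beta <= spec_norm (A *m A).
  pose e : 'cV[R]_2 := \col_i (if (i : nat) == 1%N then 1 else 0).
  have e0 : e 0 0 = 0 by rewrite mxE.
  have e1 : e 1 0 = 1 by rewrite mxE.
  have he : vnorm2 e <= 1 by rewrite vn2 e0 e1 expr0n /= add0r expr1n sqrtr1.
  apply: le_trans (spec_ge _ he).
  rewrite vn2 !mulv2 e0 e1 !mulr0 !add0r !mulr1 !AA A10 A11 A01 mul0r addr0 mul1r.
  rewrite -[X in X <= _](ger0_norm b0) -sqrtr_sqr ler_sqrt; last by rewrite addr_ge0 ?sqr_ge0.
  by rewrite sqrrN lerDr sqr_ge0.
have yp : 0 < spec_norm (A *m A) by apply: lt_le_trans hy.
rewrite ler_pdivrMr //.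
apply: le_trans hx _.
rewrite [X in X <= _](_ : _ = beta^-1 * (1 + 4 * beta + beta ^+ 2) * beta);
  last by rewrite mulrAC mulVf ?mul1r.
apply: ler_wpM2l hy.
by rewrite mulr_ge0 ?invr_ge0 // !addr_ge0 ?sqr_ge0 ?mulr_ge0.
Qed.
End S3.

Theorem lemmaA4 (R : realType) (d : nat) (X : 'M[R]_d) (gamma : 'I_d -> R)
    (lam Lam : R) :
  posdef X ->
  char_poly X = \prod_(i < d) ('X - (gamma i)%:P) ->
  (forall i j : 'I_d, (i <= j)%N -> gamma j <= gamma i) ->
  0 < lam -> lam <= Lam ->
  (forall i : 'I_d, lam <= gamma i <= Lam) ->
  let mu := 4 / (Num.sqrt lam + Num.sqrt Lam) ^+ 2 in
  let beta := ((Num.sqrt Lam - Num.sqrt lam) / (Num.sqrt Lam + Num.sqrt lam)) ^+ 2 in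
  \big[Num.max/0]_(i < d)
     (spec_norm (hb_mat mu beta (gamma i)) ^+ 2
        / spec_norm (hb_mat mu beta (gamma i) *m hb_mat mu beta (gamma i)))
  <= beta^-1 * (1 + 4 * beta + beta ^+ 2).
Proof.
move=> _ _ _ l0 lL hg; cbv zeta.
set mu := 4 / _.
set beta := (_ / _) ^+ 2.
have b0 : 0 <= beta by rewrite /beta sqr_ge0.
have B0 : 0 <= beta^-1 * (1 + 4 * beta + beta ^+ 2).
  apply: mulr_ge0; first by rewrite invr_ge0.
  by rewrite addr_ge0 ?sqr_ge0 // addr_ge0 // mulr_ge0.
apply: (big_ind (fun x => x <= beta^-1 * (1 + 4 * beta + beta ^+ 2))) => //.
  by move=> x y hx hy; rewrite ge_max hx hy.
move=> i _; apply: ratio_le => //.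
have s0 : 0 < Num.sqrt lam by rewrite sqrtr_gt0.
have st : Num.sqrt lam <= Num.sqrt Lam by apply: ler_wsqrtr.
have e1 : Num.sqrt lam ^+ 2 = lam by rewrite sqr_sqrtr // ltW.
have e2 : Num.sqrt Lam ^+ 2 = Lam by rewrite sqr_sqrtr // (le_trans (ltW l0) lL).
have hg' : Num.sqrt lam ^+ 2 <= gamma i <= Num.sqrt Lam ^+ 2 by rewrite e1 e2 hg.
exact: (alg2 s0 st hg').
Qed.
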